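(* Let $(\mathcal L,\mathcal B)$ be a separation pair such that every module in $\mathcal B$ is strict $\langle\mathcal L\rangle$-atomic (this holds, e.g., if all modules in $\mathcal B$ are countably generated). Then every strict $\mathcal L$-atomic module in $\mathrm{PGen}\,\mathcal B$ is strict $\langle\mathcal L\rangle$-atomic.
   Context: $R$ is a ring with $1$; modules are left $R$-modules. pp formulas as usual; $\phi\le_{\mathcal L}\psi$ means $\phi(L)\subseteq\psi(L)$ for all $L\in\mathcal L$; $\langle\mathcal L\rangle$ is the definable subcategory generated by $\mathcal L$ (modules $N$ with $\phi(N)\subseteq\psi(N)$ whenever $\phi\le_{\mathcal L}\psi$). For a class $\mathcal X$, $(M,\bar m)$ is an $\mathcal X$-free realization of pp $\phi$ if $\bar m\in\phi(M)$ and for all $X\in\mathcal X$, $\bar c\in\phi(X)$ there is a homomorphism $M\to X$ with $\bar m\mapsto\bar c$; $M$ is strict $\mathcal X$-atomic if every finite tuple is an $\mathcal X$-free realization of some pp formula. A homomorphism $g:B\to C$ is an $\mathcal L$-pure epimorphism if for every tuple $\bar c$ in $C$ and pp $\phi$ with $\bar c\in\phi(C)$ there are a $g$-preimage $\bar b$ and pp $\psi\le_{\mathcal L}\phi$ with $\bar b\in\psi(B)$. A separation pair is a pair $(\mathcal L,\mathcal B)$ of classes with $\mathcal B\subseteq\mathcal L$, $\mathcal L$ closed under direct sums and $\mathcal L$-pure epimorphic images, and $\mathcal B$ a class of strict $\mathcal L$-atomic modules containing only a set of isomorphism types and closed under finite direct sums. $\mathrm{PGen}\,\mathcal B$ is the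 class of pure-epimorphic images of direct sums of modules from $\mathcal B$. *)

(* Defs.v *)
From HB Require Import structures.
From mathcomp Require Import all_boot all_order all_algebra.

Set Implicit Arguments.
Unset Strict Implicit.
Unset Printing Implicit Defensive.

Import GRing.Theory.
Local Open Scope ring_scope.

Definition modclass (R : pzRingType) := lmodType R -> Prop.

Definition is_hom (R : pzRingType) (M N : lmodType R) (f : M -> N) : Prop :=
  (forall x y : M, f (x + y) = f x + f y) /\ (forall (r : R) (x : M), f (r *: x) = r *: f x).

(* A pp formula in n free variables x_1..x_n:
     exists y_1..y_m, /\_{i<k} (sum_j A_ij x_j + sum_l B_il y_l = 0). *)
Record ppf (R : pzRingType) (n : nat) := PPF {
  pp_m : nat;
  pp_k : nat;
  pp_A : 'M[R]_(pp_k, n);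
  pp_B : 'M[R]_(pp_k, pp_m) }.

Definition pp_sat (R : pzRingType) (n : nat) (M : lmodType R) (phi : ppf R n)
    (x : 'I_n -> M) : Prop :=
  exists y : 'I_(pp_m phi) -> M,
    forall i : 'I_(pp_k phi),
      \sum_(j < n) pp_A phi i j *: x j + \sum_(l < pp_m phi) pp_B phi i l *: y l = 0.

Definition pp_le (R : pzRingType) (L : modclass R) (n : nat) (phi psi : ppf R n) : Prop :=
  forall M : lmodType R, L M -> forall x : 'I_n -> M, pp_sat phi x -> pp_sat psi x.

(* <L> : the definable subcategory generated by L *)
Definition defgen (R : pzRingType) (L : modclass R) : modclass R :=
  fun N => forall (n : nat) (phi psi : ppf R n), pp_le L phi psi ->
    forall x : 'I_n -> N, pp_sat phi x -> pp_sat psi x.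

Definition free_realization (R : pzRingType) (X : modclass R) (M : lmodType R)
    (n : nat) (m : 'I_n -> M) (phi : ppf R n) : Prop :=
  pp_sat phi m /\
  forall (Y : lmodType R), X Y -> forall c : 'I_n -> Y, pp_sat phi c ->
    exists f : M -> Y, is_hom f /\ forall j, f (m j) = c j.

Definition strict_atomic (R : pzRingType) (X : modclass R) (M : lmodType R) : Prop :=
  forall (n : nat) (m : 'I_n -> M), exists phi : ppf R n, free_realization X m phi.

Definition L_pure_epi (R : pzRingType) (L : modclass R) (B C : lmodType R) (g : B -> C) : Prop :=
  is_hom g /\
  forall (n : nat) (c : 'I_n -> C) (phi : ppf R n), pp_sat phi c ->
    exists (b : 'I_n -> B) (psi : ppf R n),
      (forall j, g (b j) = c j) /\ pp_le L psi phi /\ pp_sat psi b.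

Definition pure_epi (R : pzRingType) (B C : lmodType R) (g : B -> C) : Prop :=
  is_hom g /\
  forall (n : nat) (c : 'I_n -> C) (phi : ppf R n), pp_sat phi c ->
    exists b : 'I_n -> B, (forall j, g (b j) = c j) /\ pp_sat phi b.

Definition is_direct_sum (R : pzRingType) (I : Type) (M : I -> lmodType R)
    (D : lmodType R) (e : forall i, M i -> D) : Prop :=
  (forall i, is_hom (e i)) /\
  forall (X : lmodType R) (f : forall i, M i -> X), (forall i, is_hom (f i)) ->
    exists g : D -> X, [/\ is_hom g, (forall i x, g (e i x) = f i x) &
      forall g' : D -> X, is_hom g' -> (forall i x, g' (e i x) = f i x) ->
        forall d, g' d = g d].

Definition closed_dsum (R : pzRingType) (L : modclass R) : Prop :=
  forall (I : Type) (M : I -> lmodType R) (D : lmodType R) (e : forall i, M i -> D),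
    (forall i, L (M i)) -> @is_direct_sum R I M D e -> L D.

Definition closed_fin_dsum (R : pzRingType) (L : modclass R) : Prop :=
  forall (I : finType) (M : I -> lmodType R) (D : lmodType R) (e : forall i, M i -> D),
    (0 < #|I|)%N -> (forall i, L (M i)) -> @is_direct_sum R I M D e -> L D.

Definition closed_L_pure_epi_images (R : pzRingType) (L : modclass R) : Prop :=
  forall (B C : lmodType R) (g : B -> C), L B -> L_pure_epi L g -> L C.

Definition iso (R : pzRingType) (M N : lmodType R) : Prop :=
  exists (f : M -> N) (h : N -> M), [/\ is_hom f, is_hom h, cancel f h & cancel h f].

(* the class contains only a set of isomorphism types *)
Definition small_class (R : pzRingType) (B : modclass R) : Prop :=
  exists (J : Type) (F : J -> lmodType R), forall M, B M -> exists j, iso M (F j).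

Definition separation_pair (R : pzRingType) (L B : modclass R) : Prop :=
  ((forall M, B M -> L M) /\ closed_dsum L /\ closed_L_pure_epi_images L) /\
  ((forall M, B M -> strict_atomic L M) /\ small_class B /\ closed_fin_dsum B).

Definition PGen (R : pzRingType) (B : modclass R) : modclass R :=
  fun C => exists (I : Type) (M : I -> lmodType R) (D : lmodType R)
    (e : forall i, M i -> D) (g : D -> C),
    [/\ (forall i, B (M i)), @is_direct_sum R I M D e & pure_epi g].

(* Main.v *)
From HB Require Import structures.
Require Import Defs.
From mathcomp Require Import all_boot all_order all_algebra.
From Stdlib Require Import ClassicalEpsilon Eqdep.
Set Implicit Arguments. Unset Strict Implicit. Unset Printing Implicit Defensive.
Import GRing.Theory.
Local Open Scope ring_scope.

Section Homs.
Variable R : pzRingType.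
Implicit Types M N P : lmodType R.

Lemma hom0 M N (f : M -> N) : is_hom f -> f 0 = 0.
Proof. move=> [fD _]; apply: (addrI (f 0)); by rewrite -fD !addr0. Qed.

Lemma homB M N (f : M -> N) : is_hom f -> forall x y, f (x - y) = f x - f y.
Proof.
move=> hf x y; have [fD _] := hf; apply: (addIr (f y)).
by rewrite -fD subrK addrNK.
Qed.

Lemma hom_sum M N (f : M -> N) : is_hom f -> forall k (F : 'I_k -> M),
  f (\sum_(i < k) F i) = \sum_(i < k) f (F i).
Proof. move=> hf k F; have [fD _] := hf; exact: (big_morph f fD (hom0 hf)). Qed.

Lemma hom_pp M N (f : M -> N) : is_hom f -> forall n (phi : ppf R n) x,
  pp_sat phi x -> pp_sat phi (fun j => f (x j)).
Proof.
move=> hf n phi x [y Hy]; exists (fun l => f (y l)) => i.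
have [fD fZ] := hf.
rewrite -[RHS](hom0 hf) -(Hy i) fD !(hom_sum hf).
by f_equal; apply: eq_bigr => *; rewrite fZ.
Qed.

Lemma hom_comp M N P (f : M -> N) (g : N -> P) : is_hom f -> is_hom g -> is_hom (fun x => g (f x)).
Proof. move=> [fD fZ] [gD gZ]; split=> *; by rewrite ?fD ?gD ?fZ ?gZ. Qed.

Lemma hom_id M : is_hom (fun x : M => x).
Proof. by []. Qed.

Lemma hom_zero M N : is_hom (fun _ : M => (0 : N)).
Proof. by split=> *; rewrite ?addr0 ?scaler0. Qed.
End Homs.

Unset Implicit Arguments.

Definition pb (P : Prop) : bool := if excluded_middle_informative P then true else false.
Lemma pbP P : reflect P (pb P).
Proof. rewrite /pb; case: excluded_middle_informative => H; constructor; done. Qed.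

Section DSum.
Variables (R : pzRingType) (I : Type) (Mf : I -> lmodType R) (D : lmodType R)
  (e : forall i, Mf i -> D).
Hypothesis hds : @is_direct_sum R I Mf D e.

Lemma ds_hom i : is_hom (e i). Proof. exact: hds.1. Qed.

Lemma ds_unique (X : lmodType R) (g1 g2 : D -> X) : is_hom g1 -> is_hom g2 ->
  (forall i x, g1 (e i x) = g2 (e i x)) -> forall z, g1 z = g2 z.
Proof.
move=> h1 h2 H z.
have [g [hg Hg U]] := hds.2 X (fun i x => g2 (e i x)) (fun i => hom_comp (ds_hom i) h2).
by rewrite (U g1 h1 H) (U g2 h2 (fun _ _ => erefl)).
Qed.

Definition tr (i j : I) (H : j = i) (x : Mf j) : Mf i :=
  match H in _ = k return Mf k with erefl => x end.
Lemma tr_hom i j (H : j = i) : is_hom (tr i j H). Proof. destruct H; split; reflexivity. Qed.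

Definition pfam i j : Mf j -> Mf i :=
  match excluded_middle_informative (j = i) with left H => tr i j H | right _ => fun _ => 0 end.
Lemma pfam_hom i j : is_hom (pfam i j).
Proof. rewrite /pfam; case: excluded_middle_informative => H; [exact: tr_hom | exact: hom_zero]. Qed.

Definition proj i : D -> Mf i :=
  proj1_sig (constructive_indefinite_description _ (hds.2 (Mf i) (pfam i) (pfam_hom i))).
Lemma proj_spec i : is_hom (proj i) /\ forall j x, proj i (e j x) = pfam i j x.
Proof.
rewrite /proj; case: constructive_indefinite_description => g [hg Hg _] /=; by split.
Qed.
Lemma proj_hom i : is_hom (proj i). Proof. exact: (proj_spec i).1. Qed.
Lemma proj_ee i x : proj i (e i x) = x.
Proof.
rewrite (proj_spec i).2 /pfam; case: excluded_middle_informative => H //.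
by rewrite (UIP_refl _ _ H).
Qed.
Lemma proj_ne i j x : j <> i -> proj i (e j x) = 0.
Proof. by move=> nji; rewrite (proj_spec i).2 /pfam; case: excluded_middle_informative. Qed.

Definition fixes (P : D -> D) (s : seq I) :=
  forall i, List.In i s -> forall x, P (e i x) = e i x.
Definition finp (z : D) := exists s, forall P, is_hom P -> fixes P s -> P z = z.

Lemma finp0 : finp 0. Proof. by exists [::] => P hP _; exact: hom0. Qed.
Lemma finpZD a u v : finp u -> finp v -> finp (a *: u + v).
Proof.
move=> [s1 H1] [s2 H2]; exists (s1 ++ s2) => P hP fx; have [PD PZ] := hP.
rewrite PD PZ (H1 P hP) ?(H2 P hP) // => i Hi; apply: fx; apply: List.in_or_app; by [left|right].
Qed.
Lemma finp_e i x : finp (e i x).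
Proof. by exists [:: i] => P _ fx; apply: fx; left. Qed.

Definition finpred : {pred D} := fun z => pb (finp z).
Lemma finpred_closed : GRing.submod_closed finpred.
Proof.
split; first by apply/pbP; exact: finp0.
by move=> a u v /pbP Hu /pbP Hv; apply/pbP; apply: finpZD.
Qed.
HB.instance Definition _ := GRing.isSubmodClosed.Build R D finpred finpred_closed.
Definition ST := {z : D | finpred z}.
HB.instance Definition _ := [isSub of ST for @proj1_sig D finpred].
HB.instance Definition _ := [Choice of ST by <:].
HB.instance Definition _ := [SubChoice_isSubLmodule of ST by <:].

Definition fe i (x : Mf i) : ST := exist _ (e i x) (introT (pbP _) (finp_e i x)).

Lemma fe_hom i : is_hom (@fe i).
Proof.
have [eD eZ] := ds_hom i.
split=> *; apply: val_inj; by rewrite /= ?GRing.valD ?GRing.valZ /= ?eD ?eZ.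
Qed.

Lemma all_finp z : finp z.
Proof.
have [h [hh Hh _]] := hds.2 ST fe fe_hom.
have hv : is_hom (fun z => val (h z)).
  have [hD hZ] := hh; split=> *; by rewrite ?hD ?hZ ?GRing.valD ?GRing.valZ.
have E := ds_unique _ _ _ hv (@hom_id _ D) (fun i x => congr1 val (Hh i x)).
rewrite -(E z); apply/pbP; exact: valP (h z).
Qed.

Lemma fin_tuple n (d : 'I_n -> D) : exists s, forall P, is_hom P -> fixes P s ->
  forall j, P (d j) = d j.
Proof.
suff H : forall zs : seq D, exists s, forall P, is_hom P -> fixes P s ->
  forall z, z \in zs -> P z = z.
  have [s Hs] := H (map d (enum 'I_n)); exists s => P hP fx j; apply: Hs => //.
  by apply: map_f; rewrite mem_enum.
elim=> [|z zs [s IH]]; first by exists [::].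
have [s1 H1] := all_finp z.
exists (s1 ++ s) => P hP fx w; rewrite inE => /orP [/eqP -> | wi].
  by apply: H1 => // i Hi; apply: fx; apply: List.in_or_app; left.
by apply: IH => // i Hi; apply: fx; apply: List.in_or_app; right.
Qed.
End DSum.

Section Bin.
Variable R : pzRingType.

Lemma hom_B (M N : lmodType R) (f g : M -> N) : is_hom f -> is_hom g ->
  is_hom (fun z => f z - g z).
Proof.
move=> [fD fZ] [gD gZ]; split=> *; rewrite ?fD ?gD ?fZ ?gZ.
  by rewrite opprD addrACA.
by rewrite scalerBr.
Qed.

Lemma hom_pair (M N1 N2 : lmodType R) (f1 : M -> N1) (f2 : M -> N2) :
  is_hom f1 -> is_hom f2 -> is_hom (fun z => ((f1 z, f2 z) : (N1 * N2)%type)).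
Proof. move=> [fD fZ] [gD gZ]; split=> *; by rewrite ?fD ?gD ?fZ ?gZ. Qed.

Lemma hom_copair (M1 M2 N : lmodType R) (f1 : M1 -> N) (f2 : M2 -> N) :
  is_hom f1 -> is_hom f2 -> is_hom (fun p : (M1 * M2)%type => f1 p.1 + f2 p.2).
Proof.
move=> [fD fZ] [gD gZ]; split=> [[a b] [c d]|r [a b]] /=.
  by rewrite fD gD addrACA.
by rewrite fZ gZ scalerDr.
Qed.

Definition bfam (Y1 Y2 : lmodType R) (b : bool) : lmodType R := if b then Y1 else Y2.
Definition binj (Y1 Y2 : lmodType R) (b : bool) : bfam Y1 Y2 b -> (Y1 * Y2)%type :=
  match b return bfam Y1 Y2 b -> (Y1 * Y2)%type with
  | true => fun x => (x, 0) | false => fun x => (0, x) end.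

Lemma binj_ds (Y1 Y2 : lmodType R) :
  @is_direct_sum R bool (bfam Y1 Y2) (Y1 * Y2)%type (binj Y1 Y2).
Proof.
split.
  case; split=> * /=.
  - by congr (_, _); rewrite addr0.
  - by congr (_, _); rewrite scaler0.
  - by congr (_, _); rewrite addr0.
  - by congr (_, _); rewrite scaler0.
move=> X f hf.
exists (fun p => f true p.1 + f false p.2); split.
- have [aD aZ] := hf true; have [bD bZ] := hf false.
  split=> [[a b] [c d]|r [a b]] /=.
    by rewrite aD bD addrACA.
  by rewrite aZ bZ scalerDr.
- case=> x /=; [by rewrite (hom0 (hf false)) addr0 | by rewrite (hom0 (hf true)) add0r].
- move=> g' hg' Hg' [a b].
  transitivity (g' (binj Y1 Y2 true a + binj Y1 Y2 false b)).
    by congr g'; congr (_, _); rewrite /= ?addr0 ?add0r.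
  by rewrite hg'.1 !Hg'.
Qed.

Lemma B_bin (Bc : modclass R) (Y1 Y2 : lmodType R) : closed_fin_dsum Bc ->
  Bc Y1 -> Bc Y2 -> Bc (Y1 * Y2)%type.
Proof.
move=> cl h1 h2.
apply: (cl bool (bfam Y1 Y2) _ (binj Y1 Y2)); [by rewrite card_bool | by case | exact: binj_ds].
Qed.

Lemma build (Bc : modclass R) (I : Type) (Mf : I -> lmodType R) (D : lmodType R)
  (e : forall i, Mf i -> D) : @is_direct_sum R I Mf D e -> closed_fin_dsum Bc ->
  (forall i, Bc (Mf i)) ->
  forall s : seq I, s <> [::] -> exists (Y : lmodType R) (sg : Y -> D) (rh : D -> Y),
    [/\ Bc Y, is_hom sg, is_hom rh & fixes R I Mf D e (fun z => sg (rh z)) s].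
Proof.
move=> hds cl HB; elim=> [//|a s IH] _.
case: s IH => [|b s] IH.
  exists (Mf a), (e a), (proj R I Mf D e hds a); split.
  - exact: HB.
  - exact: ds_hom hds a.
  - exact: proj_hom.
  - by move=> i [<-|[]] x; rewrite proj_ee.
have [Y [sg [rh [BY hsg hrh fx]]]] := IH (fun H => ltac:(discriminate)).
pose pa := proj R I Mf D e hds a.
have hpa : is_hom pa by exact: proj_hom.
have hea := ds_hom R I Mf D e hds a.
exists (Y * Mf a)%type, (fun p => sg p.1 + e a p.2),
  (fun z => (rh (z - e a (pa z)), pa z)); split.
- exact: B_bin.
- exact: hom_copair.
- apply: hom_pair => //; apply: hom_comp hrh.
  exact: hom_B (@hom_id _ D) (hom_comp hpa hea).
- move=> i Hi x /=.
  case: (excluded_middle_informative (i = a)) => [Eia|ne].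
    subst i; rewrite /pa proj_ee subrr (hom0 hrh) (hom0 hsg) add0r //.
  rewrite /pa proj_ne // (hom0 hea) subr0 addr0; apply: fx.
  by case: Hi => // Eai; case: ne.
Qed.
End Bin.

Lemma pp_ext (R : pzRingType) (M : lmodType R) n (phi : ppf R n) (x x' : 'I_n -> M) :
  (forall j, x j = x' j) -> pp_sat phi x -> pp_sat phi x'.
Proof.
move=> E [y Hy]; exists y => i; rewrite -[RHS](Hy i).
by rewrite (eq_bigr (fun j => pp_A phi i j *: x j)) // => j _; rewrite E.
Qed.

Definition psi0 (R : pzRingType) n : ppf R n := @PPF R n 0 n 1%:M 0.

Lemma psi0_sat (R : pzRingType) (M : lmodType R) n (c : 'I_n -> M) :
  pp_sat (psi0 R n) c -> forall j, c j = 0.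
Proof.
move=> [y Hy] j; rewrite -(Hy j) big_ord0 addr0 /= (bigD1 j) //= mxE eqxx scale1r.
rewrite big1 ?addr0 // => k kj; by rewrite mxE eq_sym (negbTE kj) mulr0n scale0r.
Qed.

Lemma psi0_zero (R : pzRingType) (M : lmodType R) n : pp_sat (psi0 R n) (fun _ => (0 : M)).
Proof.
exists (fun _ => 0) => i; rewrite big_ord0 addr0 big1 // => j _; exact: scaler0.
Qed.

Theorem proposition7p1 (R : pzRingType) (L B : modclass R) :
  separation_pair L B ->
  (forall M, B M -> strict_atomic (defgen L) M) ->
  forall M : lmodType R, PGen B M -> strict_atomic L M -> strict_atomic (defgen L) M.
Proof.
move=> [[BL [cds cpe]] [Batom [_ cfd]]] Bat M [I [Mf [D [e [g [HB hds hpe]]]]]] Matom n m.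
have [phi [phim Hphi]] := Matom n m.
have [d [gd phid]] := hpe.2 n m phi phim.
have LD : L D := cds I Mf D e (fun i => BL _ (HB i)) hds.
have [f [hf fm]] := Hphi D LD d phid.
have [s Hs] := fin_tuple R I Mf D e hds n d.
case: s Hs => [|a s] Hs.
  have d0 : forall j, d j = 0.
    move=> j; rewrite -(Hs (fun _ => 0) (hom_zero _ _)) // => i [].
  have m0 : forall j, m j = 0 by move=> j; rewrite -gd d0 (hom0 hpe.1).
  exists (psi0 R n); split.
    apply: (pp_ext _ _ _ _ (fun _ => 0)); last exact: psi0_zero.
    by move=> j; rewrite m0.
  move=> N _ c /psi0_sat c0; exists (fun _ => 0); split; first exact: hom_zero.
  by move=> j; rewrite c0.
have [Y [sg [rh [BY hsg hrh fx]]]] :=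
  build R B I Mf D e hds cfd HB (a :: s) (fun H => ltac:(discriminate)).
pose y := fun j => rh (d j).
have sgy : forall j, sg (y j) = d j := fun j => Hs _ (hom_comp hrh hsg) fx j.
have [psi [psiy Hpsi]] := Bat Y BY n y.
exists psi; split.
  apply: pp_ext (hom_pp (hom_comp hsg hpe.1) psiy) => j /=.
  by rewrite sgy gd.
move=> N HN c psic.
have [h [hh hy]] := Hpsi N HN c psic.
exists (fun z => h (rh (f z))); split.
  exact: hom_comp (hom_comp hf hrh) hh.
by move=> j; rewrite fm hy.
Qed.
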